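(* Let $Z$ be a smooth toric variety with ample anticanonical bundle which is obtained from $\mathbb{A}^l$ by a sequence of blow-ups, each centered in a torus-fixed point of the previous variety. Then $Z$ is either $\mathbb{A}^l$ or the blow-up of $\mathbb{A}^l$ at the torus-fixed point (the origin).
   Context: $\mathbb{A}^l$ is the affine toric variety of the torus $S=(\mathbb{C}^* )^l$ (fan: the cone spanned by a lattice basis and its faces); blow-ups at torus-fixed points are toric, corresponding to star subdivision of a maximal cone at the sum of its generators. *)

(* Defs.v *)
From HB Require Import structures.
From mathcomp Require Import all_boot all_order all_algebra.
From mathcomp Require Import finmap.
Set Implicit Arguments. Unset Strict Implicit. Unset Printing Implicit Defensive.
Import Order.TTheory GRing.Theory Num.Theory.
Local Open Scope ring_scope.
Local Open Scope fset_scope.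

Definition lat (l : nat) := 'rV[int]_l.

(* A smooth full-dimensional cone, given by its set of primitive ray
   generators (a lattice basis for the cones considered here). *)
Definition cone (l : nat) := {fset lat l}.

(* A fan all of whose maximal cones are full-dimensional, given by the set
   of its maximal cones (the fan is the set of their faces). *)
Definition fan (l : nat) := {fset cone l}.

(* The cone spanned by the standard basis e_1,...,e_l: the fan of A^l. *)
Definition std_cone (l : nat) : cone l :=
  [fset (delta_mx 0 i : lat l) | i in 'I_l].

Definition affine_fan (l : nat) : fan l := [fset std_cone l].

(* Star subdivision of the maximal cone s of F at the sum v of its
   generators: s is replaced by the cones  cone(v, s \ {u}),  u in s.
   This is the fan of the blow-up at the torus-fixed point of s. *)
Definition star_subdiv (l : nat) (F : fan l) (s : cone l) : fan l :=
  let v := \sum_(u <- s) u in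
  (F `\ s) `|` [fset (v |` (s `\ u)) | u in s].

(* Fans of the toric varieties obtained from A^l by a finite sequence of
   blow-ups, each centered at a torus-fixed point (= a maximal,
   full-dimensional cone) of the previous variety. *)
Inductive iterated_blowup (l : nat) : fan l -> Prop :=
| ib_base : iterated_blowup (affine_fan l)
| ib_blow (F : fan l) (s : cone l) :
    iterated_blowup F -> s \in F -> iterated_blowup (star_subdiv F s).

(* Ampleness of the anticanonical divisor -K = sum_rho D_rho on a smooth
   toric variety whose fan has convex full-dimensional support: its support
   function is strictly convex, i.e. for every maximal cone s there is a
   linear form psi_s in M with psi_s(u) = 1 on the generators of s and
   psi_s(u) < 1 on every other ray generator of the fan. *)
Definition anticanonical_ample (l : nat) (F : fan l) : Prop :=
  forall s : cone l, s \in F ->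
    exists psi : 'cV[int]_l,
      (forall u, u \in s -> (u *m psi) 0 0 = 1) /\
      (forall t : cone l, t \in F -> forall u, u \in t -> u \notin s ->
         (u *m psi) 0 0 < 1).

(* Main.v *)
Require Import Defs.
From HB Require Import structures.
From mathcomp Require Import all_boot all_order all_algebra.
From mathcomp Require Import finmap.
From mathcomp Require Import zify ring lra.
Local Open Scope fset_scope.
Import Order.TTheory GRing.Theory Num.Theory.

Section Helpers.
Local Open Scope fset_scope.
Local Open Scope ring_scope.
Variable l : nat.

Definition ev (psi : 'cV[int]_l) (x : lat l) : int := (x *m psi) 0 0.
Definition deg (x : lat l) : int := ev (const_mx 1) x.

Lemma ev_sum psi (I : Type) (r : seq I) (F : I -> lat l) :
  ev psi (\sum_(i <- r) F i) = \sum_(i <- r) ev psi (F i).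
Proof. by rewrite /ev mulmx_suml summxE. Qed.

Lemma ev_add psi x y : ev psi (x + y) = ev psi x + ev psi y.
Proof. by rewrite /ev mulmxDl mxE. Qed.

Lemma ev_scale psi a x : ev psi (a *: x) = a * ev psi x.
Proof. by rewrite /ev -scalemxAl mxE. Qed.

Lemma deg_delta (i : 'I_l) : deg (delta_mx 0 i) = 1.
Proof. by rewrite /deg /ev -rowE !mxE. Qed.

Lemma deg_sum_le {s : cone l} {x} :
  (forall y, y \in s -> 0 < deg y) -> x \in s -> deg x <= deg (\sum_(z <- s) z).
Proof.
move=> Hp xs; rewrite /deg ev_sum -/deg (big_fsetD1 x) //= lerDl big_seq sumr_ge0 // => y.
by rewrite in_fsetD1 => /andP[_ /Hp] /ltW.
Qed.

Lemma deg_sum_lt {s : cone l} {x y} :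
  (forall y, y \in s -> 0 < deg y) -> x \in s -> y \in s -> x != y ->
  deg x < deg (\sum_(z <- s) z).
Proof.
move=> Hp xs ys nxy; rewrite /deg ev_sum -/deg (big_fsetD1 x) //= ltrDl.
have ys' : y \in s `\ x by rewrite in_fsetD1 eq_sym nxy.
rewrite (big_fsetD1 y) //= ltr_pwDl ?Hp // big_seq sumr_ge0 // => z.
by rewrite !in_fsetD1 => /andP[_ /andP[_ /Hp]] /ltW.
Qed.


Lemma card_std : #|` std_cone l| = l.
Proof.
rewrite /std_cone card_imfset.
  rewrite -(card_uniqP (enum_finmem_uniq _)).
  rewrite -[RHS]card_ord; apply: eq_card => i; by rewrite enum_finmemE.
move=> i j /matrixP /(_ ord0 i); rewrite !mxE eqxx /=.
by case: eqP => // _ /eqP; rewrite oner_eq0.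
Qed.

Lemma deg_std x : x \in std_cone l -> 0 < deg x.
Proof. by case/imfsetP => i _ ->; rewrite deg_delta. Qed.

Definition vsum (s : cone l) : lat l := \sum_(z <- s) z.

Lemma star_new (F : fan l) s u : u \in s -> vsum s |` (s `\ u) \in star_subdiv F s.
Proof. by move=> us; rewrite /star_subdiv in_fsetU; apply/orP; right; apply/imfsetP; exists u. Qed.

Lemma star_old (F : fan l) s t : t \in F -> t != s -> t \in star_subdiv F s.
Proof. by move=> tF ts; rewrite /star_subdiv in_fsetU in_fsetD1 ts tF. Qed.

Lemma star_inv (F : fan l) s t : t \in star_subdiv F s ->
  (t \in F /\ t != s) \/ exists2 u, u \in s & t = vsum s |` (s `\ u).
Proof.
rewrite /star_subdiv in_fsetU in_fsetD1 => /orP[/andP[ts tF]|/imfsetP[u us ->]].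
  by left.
by right; exists u.
Qed.

Definition Gen (F : fan l) := forall s, s \in F -> #|` s| = l /\ forall x, x \in s -> 0 < deg x.

Lemma gen_affine : Gen (affine_fan l).
Proof. by move=> s; rewrite in_fset1 => /eqP ->; split; [exact: card_std | exact: deg_std]. Qed.

Lemma vsum_notin (s : cone l) u : (forall y, y \in s -> 0 < deg y) -> u \in s ->
  vsum s \notin s `\ u.
Proof.
move=> Hp us; apply/negP; rewrite in_fsetD1 => /andP[nu vs].
by have := deg_sum_lt Hp vs us nu; rewrite ltxx.
Qed.

Lemma vsum_ne (s : cone l) u : (forall y, y \in s -> 0 < deg y) -> u \in s ->
  (#|` s| >= 2)%N -> vsum s != u.
Proof.
move=> Hp us c2; apply/eqP => E.
have : (0 < #|` s `\ u|)%N by move: c2; rewrite (cardfsD1 u) us; lia.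
rewrite cardfs_gt0 => /fset0Pn[y]; rewrite in_fsetD1 => /andP[yu ys].
have uy : u != y by rewrite eq_sym.
by have := deg_sum_lt Hp us ys uy; rewrite -/(vsum s) E ltxx.
Qed.

Lemma gen_star (F : fan l) s : (0 < l)%N -> Gen F -> s \in F -> Gen (star_subdiv F s).
Proof.
move=> hl G sF t /star_inv [[tF _]|[u us ->]]; first exact: G.
have [cs Hp] := G s sF.
split.
  by rewrite cardfsU1 vsum_notin //=; move: cs; rewrite (cardfsD1 u) us.
move=> x; rewrite in_fset1U => /orP[/eqP ->|]; last by rewrite in_fsetD1 => /andP[_ /Hp].
by apply: lt_le_trans (Hp _ us) (deg_sum_le Hp us).
Qed.



Lemma sum_const_seq (r : seq (lat l)) (c : int) : \sum_(x <- r) c = c * (size r)%:Z.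
Proof.
elim: r => [|x r IH]; first by rewrite big_nil mulr0.
by rewrite big_cons IH /= intS mulrDr mulr1.
Qed.

Lemma sum_const_fset (S : cone l) (c : int) : \sum_(x <- S) c = c * (#|` S|)%:Z.
Proof. exact: sum_const_seq. Qed.

Definition W (F : fan l) (s : cone l) :=
  exists2 u, u \in s & exists w, [/\ exists2 t, t \in F & w \in t, w \notin s, w != vsum s &
   exists a : lat l -> int, w + u = \sum_(x <- s `\ u) a x *: x /\
      3%:Z - (l%:Z) <= \sum_(x <- s `\ u) a x].

Lemma not_ample (F : fan l) s : Gen F -> s \in F -> W F s ->
  ~ anticanonical_ample (star_subdiv F s).
Proof.
move=> G sF [u us [w [[t tF wt] wns wnv [a [Ha Hs]]]]] Amp.
have cS := @star_new F s u us.
have [psi [H1 H2]] := Amp _ cS.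
have [cs Hp] := G s sF.
have Hx : forall x, x \in s `\ u -> ev psi x = 1 by move=> x xs; apply: H1; rewrite fset1Ur.
have Hv : ev psi (vsum s) = 1 by apply: H1; rewrite fset1U1.
have Hcard : #|` s `\ u|%:Z = l%:Z - 1.
  by move: cs; rewrite (cardfsD1 u s) us /=; lia.
have Hu : ev psi (vsum s) = ev psi u + (l%:Z - 1).
  rewrite /vsum ev_sum (big_fsetD1 u) //= big_seq (eq_bigr (fun=> 1)).
    by rewrite -big_seq sum_const_fset mul1r Hcard.
  by move=> x /Hx.
have Hw : ev psi w + ev psi u = \sum_(x <- s `\ u) a x.
  rewrite -ev_add Ha ev_sum big_seq [RHS]big_seq; apply: eq_bigr => x xs.
  by rewrite ev_scale Hx // mulr1.
have tS : t \in star_subdiv F s.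
  apply: star_old => //; apply/eqP => ts; move: wns; by rewrite -ts wt.
have wc : w \notin vsum s |` (s `\ u).
  by rewrite in_fset1U negb_or wnv in_fsetD1 negb_and wns orbT.
have := H2 t tS w wt wc; rewrite -/(ev psi w).
move: Hu Hw Hs; rewrite Hv; lia.
Qed.


Lemma exists_other (s : cone l) x : (2 <= #|` s|)%N -> exists2 y, y \in s & y != x.
Proof.
move=> c2.
have : (0 < #|` s `\ x|)%N by move: c2; rewrite (cardfsD1 x s); case: (x \in s) => /=; lia.
by rewrite cardfs_gt0 => /fset0Pn[y]; rewrite in_fsetD1 => /andP[yx ys]; exists y.
Qed.

Lemma wit_star (F : fan l) s : (2 <= l)%N -> Gen F -> s \in F ->
  (forall t, t \in F -> t != s -> W F t) ->
  forall t, t \in star_subdiv F s -> W (star_subdiv F s) t.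
Proof.
move=> l2 G sF HW t tS.
have G' := gen_star F s (ltnW l2) G sF.
have [cs Hp] := G s sF.
case: (@star_inv F s t tS) => [[tF ts]|[k ks ->]].
  have [u us [w [[t' t'F wt'] wns wnv Ha]]] := HW t tF ts.
  exists u => //; exists w; split => //.
  have [t's|t'ns] := eqVneq t' s.
    have [k ks kw] := exists_other s w (leq_trans l2 (eq_leq (esym cs))).
    exists (vsum s |` (s `\ k)); first exact: star_new.
    by rewrite fset1Ur // in_fsetD1 eq_sym kw -t's.
  by exists t' => //; apply: star_old.
set v := vsum s.
have [m ms mk] := exists_other s k (leq_trans l2 (eq_leq (esym cs))).
have mk' : m \in s `\ k by rewrite in_fsetD1 mk.
have vns : forall x, x \in s -> x != k -> x != v.
  move=> x xs xk; apply/eqP => xv; have := vsum_notin s k Hp ks.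
  by rewrite -/v -xv in_fsetD1 xk xs.
have vm : v != m by rewrite eq_sym vns.
have vk : v != k by apply: (vsum_ne s k Hp ks); rewrite cs.
have vnots : v \notin s.
  by apply/negP => vs; have := vsum_notin s k Hp ks; rewrite -/v in_fsetD1 vk vs.
have [cks Hpk] := G' _ (star_new F s k ks).
exists m; first by rewrite fset1Ur.
exists k; split.
- exists (v |` (s `\ m)); first exact: star_new.
  by rewrite fset1Ur // in_fsetD1 eq_sym mk ks.
- by rewrite in_fset1U negb_or eq_sym vk in_fsetD1 eqxx.
- apply/eqP => E.
  have h1 : deg k < deg v by apply: (deg_sum_lt Hp ks ms); rewrite eq_sym.
  have h2 : deg v < deg (vsum (v |` (s `\ k))).
    by apply: (deg_sum_lt Hpk (fset1U1 _ _) (fset1Ur _ mk')).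
  by move: h1 h2; rewrite -E => h1 h2; have := lt_trans h1 h2; rewrite ltxx.
have Eset : (v |` (s `\ k)) `\ m `\ v = s `\ k `\ m.
  apply/fsetP => x; rewrite !in_fsetD1 in_fset1U.
  case: (eqVneq x v) => [->|xv] /=.
    by rewrite (negbTE vnots) !andbF.
  by rewrite in_fsetD1.
have vin : v \in (v |` (s `\ k)) `\ m by rewrite in_fsetD1 vm fset1U1.
exists (fun x => if x == v then 1 else -1); split.
  rewrite (big_fsetD1 v) //= Eset eqxx scale1r big_seq (eq_bigr (fun x => - x)); last first.
    move=> x; rewrite !in_fsetD1 => /andP[_ /andP[xk xs]].
    by rewrite (negbTE (vns x xs xk)) scaleN1r.
  rewrite -big_seq sumrN /v /vsum (big_fsetD1 k) //= (big_fsetD1 m) //=.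
  by rewrite addrA addrK.
rewrite (big_fsetD1 v) //= Eset eqxx big_seq (eq_bigr (fun x => -1)); last first.
  move=> x; rewrite !in_fsetD1 => /andP[_ /andP[xk xs]].
  by rewrite (negbTE (vns x xs xk)).
rewrite -big_seq sum_const_fset.
have : #|` s| = (1 + (1 + #|` s `\ k `\ m|))%N.
  by rewrite (cardfsD1 k s) ks (cardfsD1 m (s `\ k)) mk'.
rewrite cs; lia.
Qed.

End Helpers.

Arguments Gen {l}.
Arguments W {l}.
Arguments gen_star {l}.
Arguments gen_affine {l}.
Arguments wit_star {l}.
Arguments not_ample {l}.

Section Main.
Local Open Scope fset_scope.
Local Open Scope ring_scope.

Lemma gen_ib l (F : fan l) : (0 < l)%N -> iterated_blowup F -> Gen F.
Proof.
move=> hl; elim => [|F' s _ IH sF]; first exact: gen_affine.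
exact: gen_star.
Qed.

Lemma wit_ib l (F : fan l) : (2 <= l)%N -> iterated_blowup F ->
  F = affine_fan l \/ forall t, t \in F -> W F t.
Proof.
move=> l2; elim => [|F' s ibF IH sF]; first by left.
right; apply: wit_star => //; first exact: gen_ib (ltnW l2) ibF.
move=> t tF ts; case: IH => [E|]; last by apply.
move: tF sF ts; rewrite E !in_fset1 => /eqP -> /eqP ->; by rewrite eqxx.
Qed.

Lemma star_card1 l (F : fan l) s : #|` s| = 1%N -> s \in F -> star_subdiv F s = F.
Proof.
move=> /eqP/cardfs1P[x ->] sF.
rewrite /star_subdiv big_seq_fset1.
have -> : [fset x |` ([fset x] `\ u) | u in [fset x]] = [fset [fset x]].
  apply/fsetP => c; rewrite in_fset1; apply/imfsetP/eqP => [[u]|->].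
    rewrite /= in_fset1 => /eqP -> ->.
    by apply/fsetP => y; rewrite in_fset1U in_fsetD1 in_fset1; case: (y == x).
  exists x; first by rewrite /= in_fset1.
  by apply/fsetP => y; rewrite in_fset1U in_fsetD1 in_fset1; case: (y == x).
by rewrite fsetUC fsetD1K.
Qed.

Lemma ib_l1 (F : fan 1) : iterated_blowup F -> F = affine_fan 1.
Proof.
have G := @gen_ib 1 _ isT.
elim => [|F' s ibF IH sF] //.
have [cs _] := G _ ibF s sF.
by rewrite star_card1.
Qed.

End Main.

Theorem proposition3p1 (l : nat) (hl : (0 < l)%N) (F : fan l) :
  iterated_blowup F -> anticanonical_ample F ->
  F = affine_fan l \/ F = star_subdiv (affine_fan l) (std_cone l).
Proof.
move=> ibF Amp.
have [l2|l1] := leqP 2 l; last first.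
  have e : l = 1%N by apply/eqP; rewrite eqn_leq -ltnS l1 hl.
  subst l; left; exact: ib_l1.
case: ibF Amp => [|F' s ibF sF] Amp; first by left.
case: (@wit_ib l F' l2 ibF) => [E|HW].
  right; move: sF; rewrite E in_fset1 => /eqP ->; done.
exfalso; exact: (not_ample F' s (@gen_ib l F' hl ibF) sF (HW s sF) Amp).
Qed.
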